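(* Let $G$ be a finite group and $S$ one of the Fischer groups $Fi_{22}, Fi_{23}, Fi_{24}'$. If $|G| = |S|$, then $G$ is neither a Frobenius group nor a 2-Frobenius group.
   Context: A finite group $G$ is a 2-Frobenius group if it has a normal series $1 \trianglelefteq A \trianglelefteq B \trianglelefteq G$ such that $B$ is a Frobenius group with Frobenius kernel $A$ and $G/A$ is a Frobenius group with Frobenius kernel $B/A$. Orders: $|Fi_{22}|=2^{17}\cdot3^9\cdot5^2\cdot7\cdot11\cdot13$, $|Fi_{23}|=2^{18}\cdot3^{13}\cdot5^2\cdot7\cdot11\cdot13\cdot17\cdot23$, $|Fi_{24}'|=2^{21}\cdot3^{16}\cdot5^2\cdot7^3\cdot11\cdot13\cdot17\cdot23\cdot29$. *)

(* Defs.v *)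
From mathcomp Require Import all_boot all_fingroup all_solvable.
Set Implicit Arguments. Unset Strict Implicit. Unset Printing Implicit Defensive.
Local Open Scope group_scope.

Definition two_Frobenius (gT : finGroupType) (G : {group gT}) : Prop :=
  exists (A B : {group gT}),
    [/\ A <| G, A <| B, B <| G,
        [Frobenius B with kernel A]
      & [Frobenius (G / A) with kernel (B / A)]].

Definition order_Fi22 : nat := (2^17 * 3^9 * 5^2 * 7 * 11 * 13)%N.
Definition order_Fi23 : nat := (2^18 * 3^13 * 5^2 * 7 * 11 * 13 * 17 * 23)%N.
Definition order_Fi24' : nat := (2^21 * 3^16 * 5^2 * 7^3 * 11 * 13 * 17 * 23 * 29)%N.

(* Main.v *)
Require Import Defs.
From mathcomp Require Import all_boot all_fingroup all_solvable.
From mathcomp Require vcharacter.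
Set Implicit Arguments. Unset Strict Implicit. Unset Printing Implicit Defensive.

Fixpoint prodL (L : seq (nat * nat)) : nat :=
  if L is x :: L' then (prodL L' * x.1 ^ x.2)%N else 1%N.
Fixpoint expL (L : seq (nat * nat)) (p : nat) : nat :=
  if L is x :: L' then (if x.1 == p then x.2 else expL L' p) else 0%N.
Definition goodL (L : seq (nat * nat)) :=
  uniq (map fst L) && all (fun x => prime x.1 && (0 < x.2)) L.

Definition powmod (m p k : nat) : nat := iter k (fun y => (y * p) %% m) (1 %% m).

Lemma powmodE m p k : powmod m p k = (p ^ k) %% m.
Proof.
elim: k => [|k IH] //=; rewrite /powmod /= -/(powmod m p k) IH.
by rewrite modnMml expnSr.
Qed.

Lemma dvd_pow1 m p k : 0 < p -> (m %| (p ^ k).-1) = (powmod m p k == 1 %% m).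
Proof.
move=> p0; rewrite powmodE -subn1 -eqn_mod_dvd //.
by rewrite expn_gt0 p0.
Qed.

Lemma expL_notin L p : p \notin map fst L -> expL L p = 0.
Proof.
elim: L => [|x L IH] //=; rewrite inE negb_or => /andP[ne nin].
by rewrite eq_sym (negPf ne) IH.
Qed.

Lemma prodL_gt0 L : goodL L -> 0 < prodL L.
Proof.
elim: L => [|x L IH] //= /andP[/= /andP[_ u] /= /andP[/andP[px _] a]].
by rewrite muln_gt0 IH ?/goodL ?u ?a //= expn_gt0 prime_gt0.
Qed.

Lemma logn_prodL L p : goodL L -> prime p -> logn p (prodL L) = expL L p.
Proof.
move=> gL pp; elim: L gL => [|x L IH] /= gL; first by rewrite logn1.
have gL' : goodL L.
  by move: gL; rewrite /goodL /= => /andP[/andP[_ ->] /andP[_ ->]].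
case/andP: gL => /= /andP[nx _] /andP[/andP[px _] _].
rewrite lognM ?prodL_gt0 ?expn_gt0 ?prime_gt0 ?orbT // lognX (logn_prime p px) IH //.
rewrite eq_sym; case: eqP => [<-|_]; last by rewrite muln0 addn0.
by rewrite muln1 expL_notin.
Qed.

Lemma mem_prodL L p : goodL L -> prime p -> p %| prodL L -> p \in map fst L.
Proof.
move=> gL pp dp; apply: contraTT isT => nin.
have : 0 < logn p (prodL L) by rewrite logn_gt0 mem_primes pp prodL_gt0.
by rewrite logn_prodL // expL_notin.
Qed.

Lemma prime_memL L p : goodL L -> p \in map fst L -> prime p.
Proof.
case/andP=> _ /allP a /mapP[x xL ->]; by case/andP: (a x xL).
Qed.

Lemma expL_gt0 L p : all (fun x => prime x.1 && (0 < x.2)) L -> p \in map fst L ->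
  0 < expL L p.
Proof.
elim: L => [|y L IH] //= /andP[/andP[_ y0] a]; rewrite inE => pL.
have [//|ne] := eqVneq y.1 p.
apply: IH => //; case/orP: pL => // /eqP e; by rewrite e eqxx in ne.
Qed.

Lemma dvd_prodL L p : goodL L -> p \in map fst L -> p %| prodL L.
Proof.
move=> gL pL; rewrite -[p in p %| _]expn1 pfactor_dvdn ?prodL_gt0 ?(prime_memL gL) //.
rewrite logn_prodL ?(prime_memL gL) //.
by case/andP: gL => _ a; apply: expL_gt0.
Qed.

Lemma cop_contra x y d : coprime x y -> 1 < d -> d %| x -> d %| y -> False.
Proof.
move=> cop d1 dx dy; have : d %| gcdn x y by rewrite dvdn_gcd dx dy.
by rewrite (eqP cop) dvdn1 => /eqP d1'; rewrite d1' in d1.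
Qed.

Lemma full_log L p x y : goodL L -> prime p -> p %| x -> x * y = prodL L ->
  coprime x y -> logn p x = expL L p.
Proof.
move=> gL pp px exy cop.
have N0 := prodL_gt0 gL; rewrite -exy muln_gt0 in N0; case/andP: N0 => x0 y0.
rewrite -logn_prodL // -exy lognM //.
suff -> : logn p y = 0 by rewrite addn0.
apply/eqP; rewrite eqn0Ngt logn_gt0 mem_primes pp y0 /=.
by apply/negP => py; apply: (cop_contra cop (prime_gt1 pp)).
Qed.

Section Cert.
Variables (L : seq (nat * nat)) (t u : nat).
Definition C1 := all (fun p => (p != t) ==> (powmod t p (expL L p) != 1 %% t)) (map fst L).
Definition C2 := all (fun p => (p != t) ==> (logn p t.-1 < expL L p)) (map fst L).
Definition inQ p := [&& p != t, ~~ (p %| t.-1) &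
  all (fun k => powmod t p k != 1 %% t) (iota 1 (expL L p))].
Definition C3 := all (fun p => (p != t) ==> ~~ inQ p ==>
  all (fun k => powmod (u ^ expL L u) p k != 1 %% (u ^ expL L u)) (iota 1 (expL L p)))
  (map fst L).
Definition cert := [&& goodL L, t \in map fst L, expL L t == 1, u \in map fst L,
  inQ u, C1, C2 & C3].
End Cert.


Lemma C1P L t p : C1 L t -> p \in map fst L -> p != t -> 0 < p ->
  ~~ (t %| (p ^ expL L p).-1).
Proof.
move=> c1 pL ne p0; rewrite dvd_pow1 //.
by move/allP: c1 => /(_ p pL); rewrite ne.
Qed.

Lemma C2P L t p : C2 L t -> p \in map fst L -> p != t -> logn p t.-1 < expL L p.
Proof. by move=> c2 pL ne; move/allP: c2 => /(_ p pL); rewrite ne. Qed.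

Lemma part_full p x : prime p -> logn p x = 1 -> x`_p = p.
Proof. by move=> pp lx; rewrite p_part lx expn1. Qed.

Lemma frob_arith L t u k h : cert L t u -> k * h = prodL L -> 1 < k -> 1 < h ->
  coprime k h -> (forall p : nat, h %| (k`_p).-1) -> False.
Proof.
case/and5P=> gL tL /eqP et uL /and4P[_ c1 c2 _] eN k1 h1 cop dv.
have pt := prime_memL gL tL.
have N0 := prodL_gt0 gL; rewrite -eN muln_gt0 in N0; case/andP: N0 => k0 h0.
have [th | nth] := boolP (t %| h).
  have pp := pdiv_prime k1; have pk := pdiv_dvd k.
  have pL : pdiv k \in map fst L by apply: mem_prodL; rewrite // -eN dvdn_mulr.
  have ne : pdiv k != t.
    by apply/eqP => e; apply: (cop_contra cop (prime_gt1 pt)) => //; rewrite -e.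
  have := dv (pdiv k); rewrite p_part (full_log gL pp pk eN cop) => hd.
  by case/negP: (C1P c1 pL ne (prime_gt0 pp)); apply: dvdn_trans hd.
have tk : t %| k.
  have : t %| k * h by rewrite eN dvd_prodL.
  by rewrite Euclid_dvdM // (negPf nth) orbF.
have := dv t; rewrite (part_full pt) ?(full_log gL pt tk eN cop) // => ht.
have pr := pdiv_prime h1; have rh := pdiv_dvd h.
have rL : pdiv h \in map fst L by apply: mem_prodL; rewrite // -eN dvdn_mull.
have ne : pdiv h != t by apply: contraNneq nth => <-.
have cop' : coprime h k by rewrite coprime_sym.
have := C2P c2 rL ne; rewrite -(full_log gL pr rh _ cop') ?(mulnC h) //.
rewrite ltnNge dvdn_leq_log //; first by rewrite -subn1 subn_gt0 prime_gt1.
Qed.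

Lemma frob2_arith L t u a b c : cert L t u -> a * b * c = prodL L ->
  1 < a -> 1 < b -> 1 < c -> coprime a b -> coprime b c ->
  (forall p : nat, b %| (a`_p).-1) -> (forall q : nat, c %| (b`_q).-1) -> False.
Proof.
case/and5P=> gL tL /eqP et uL /and4P[qu c1 c2 c3] eN a1 b1 c1' cab cbc dva dvb.
have pt := prime_memL gL tL.
have N0 := prodL_gt0 gL; rewrite -eN !muln_gt0 in N0.
case/andP: N0 => /andP[a0 b0] c0.
have eNb : b * (a * c) = prodL L by rewrite -eN mulnA (mulnC b a).
have copb : coprime b (a * c) by rewrite coprimeMr coprime_sym cab cbc.
have fullb q : prime q -> q %| b -> logn q b = expL L q.
  by move=> pq qb; apply: (full_log gL pq qb eNb copb).
have divN x : x %| prodL L -> prime x -> x \in map fst L.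
  by move=> xd px; apply: mem_prodL.
have aN : a %| prodL L by rewrite -eN -mulnA dvdn_mulr.
have bN : b %| prodL L by rewrite -eN (mulnC a) -mulnA dvdn_mulr.
have cN : c %| prodL L by rewrite -eN dvdn_mull.
have logA p : prime p -> p %| a -> 0 < logn p a <= expL L p.
  move=> pp pa; rewrite logn_gt0 mem_primes pp a0 pa /=.
  by rewrite -logn_prodL // dvdn_leq_log // prodL_gt0.
have tN : t %| a * b * c by rewrite eN dvd_prodL.
have t1 : 0 < t.-1 by rewrite -subn1 subn_gt0 prime_gt1.
have pb := pdiv_prime b1; have qb := pdiv_dvd b.
have qL : pdiv b \in map fst L by apply: divN => //; apply: dvdn_trans qb bN.
rewrite !Euclid_dvdM // in tN; case/orP: tN => [/orP[ta|tb]|tc].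
- have lta : logn t a = 1.
    by have := logA t pt ta; rewrite et; case: (logn t a) => [|[]].
  have := dva t; rewrite (part_full pt lta) => btd.
  have ne : pdiv b != t.
    apply/eqP => e; apply: (cop_contra cab (prime_gt1 pt)) => //; by rewrite -e.
  have := C2P c2 qL ne; rewrite -(fullb _ pb qb) ltnNge.
  by rewrite dvdn_leq_log.
- have ltb : logn t b = 1 by rewrite fullb.
  have := dvb t; rewrite (part_full pt ltb) => ctd.
  have Qb p : p \in map fst L -> inQ L t p -> p %| b.
    move=> pL /and3P[pne pnd pall]; have pp := prime_memL gL pL.
    have : p %| a * b * c by rewrite eN; apply: dvd_prodL.
    rewrite !Euclid_dvdM // => /orP[/orP[pa|//]|pc].
      have /andP[k0 ke] := logA p pp pa.
      have := dva p; rewrite p_part => bd.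
      have : t %| (p ^ logn p a).-1 by apply: dvdn_trans tb bd.
      rewrite dvd_pow1 ?prime_gt0 // => H.
      have : logn p a \in iota 1 (expL L p) by rewrite mem_iota k0 add1n ltnS.
      by move/(allP pall); rewrite H.
    by case/negP: pnd; apply: dvdn_trans pc ctd.
  have ub := Qb u uL qu; have pu := prime_memL gL uL.
  have mb : u ^ expL L u %| b by rewrite pfactor_dvdn // fullb.
  have pa1 := pdiv_prime a1; have pa := pdiv_dvd a.
  have pL : pdiv a \in map fst L by apply: divN => //; apply: dvdn_trans pa aN.
  have ne : pdiv a != t.
    apply/eqP => e; apply: (cop_contra cab (prime_gt1 pt)) => //; by rewrite -e.
  have nQ : ~~ inQ L t (pdiv a).
    apply/negP => /(Qb _ pL) pb'.
    by apply: (cop_contra cab (prime_gt1 pa1)).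
  have /andP[k0 ke] := logA _ pa1 pa.
  have := dva (pdiv a); rewrite p_part => bd.
  have : u ^ expL L u %| (pdiv a ^ logn (pdiv a) a).-1 by apply: dvdn_trans mb bd.
  rewrite dvd_pow1 ?prime_gt0 // => H.
  move/allP: c3 => /(_ _ pL); rewrite ne nQ /= => /allP c3'.
  have : logn (pdiv a) a \in iota 1 (expL L (pdiv a)) by rewrite mem_iota k0 add1n ltnS.
  by move/c3'; rewrite H.
- have ne : pdiv b != t.
    apply/eqP => e; apply: (cop_contra cbc (prime_gt1 pt)) => //; by rewrite -e.
  have := dvb (pdiv b); rewrite p_part (fullb _ pb qb) => cd.
  by case/negP: (C1P c1 qL ne (prime_gt0 pb)); apply: dvdn_trans cd.
Qed.

Local Open Scope group_scope.
Lemma frob_ker_part (gT : finGroupType) (X K : {group gT}) (p : nat) :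
  [Frobenius X with kernel K] -> (#|X : K| %| (#|K|`_p).-1)%N.
Proof.
move=> frobX; have /Frobenius_kerP[ntK ltKX nsKX regK] := frobX.
have [sKX nKX] := andP nsKX.
have [P sylP] := Sylow_exists p K.
have [sPK pP _] := and3P sylP.
have defX : K * 'N_X(P) = X := Frattini_arg nsKX sylP.
set N := 'N_X(P)%G.
have sNX : N \subset X := subsetIl _ _.
have nsMN : N :&: K <| N := normalGI sNX nsKX.
have iNM : #|N : N :&: K| = #|X : K|.
  by rewrite indexgI -indexMg defX.
have cop : coprime #|K| #|X : K| := Frobenius_ker_coprime frobX.
have hallM : Hall N (N :&: K).
  by rewrite /Hall subsetIl iNM (coprimeSg (subsetIr _ _) cop).
have [H1 /complP[tiMH1 defN]] := splitsP (SchurZassenhaus_split hallM nsMN).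
have sH1N : H1 \subset N by rewrite -defN mulG_subr.
have oH1 : #|H1| = #|X : K|.
  have := TI_cardMg tiMH1; rewrite defN -(Lagrange (subsetIl N K)) => /eqP.
  by rewrite eqn_pmul2l ?cardG_gt0 // iNM => /eqP <-.
have nPH1 : H1 \subset 'N(P) := subset_trans sH1N (subsetIr _ _).
have tiKH1 : K :&: H1 = 1.
  apply/trivgP; rewrite -tiMH1; apply/subsetP => x /setIP[Kx H1x].
  by rewrite in_setI H1x andbT /= in_setI Kx andbT (subsetP sH1N).
have regP : semiregular P H1.
  move=> h /setD1P[nth H1h]; apply/trivgP/subsetP => y /setIP[Py cyh].
  rewrite inE; apply/negPn/negP => nty.
  have Ky : y \in K by apply: (subsetP sPK).
  have : h \in 'C_X[y].
    by rewrite inE (subsetP sNX) ?(subsetP sH1N) // cent1C.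
  move/(subsetP (regK y _)); rewrite !inE nty Ky => /(_ isT) Kh.
  have : h \in K :&: H1 by rewrite inE Kh.
  by rewrite tiKH1 inE (negPf nth).
rewrite -oH1 -(card_Hall sylP).
exact: regular_norm_dvd_pred nPH1 regP.
Qed.

Local Close Scope group_scope.
Definition L22 := [:: (13,1);(11,1);(7,1);(5,2);(3,9);(2,17)].
Definition L23 := [:: (23,1);(17,1);(13,1);(11,1);(7,1);(5,2);(3,13);(2,18)].
Definition L24 := [:: (29,1);(23,1);(17,1);(13,1);(11,1);(7,3);(5,2);(3,16);(2,21)].

Lemma e22 : order_Fi22 = prodL L22.
Proof. rewrite /order_Fi22 /L22 /prodL /= (expn1 7) (expn1 11) (expn1 13) (mul1n (2^17)). reflexivity. Qed.
Lemma e23 : order_Fi23 = prodL L23.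
Proof. rewrite /order_Fi23 /L23 /prodL /= (expn1 7) (expn1 11) (expn1 13) (expn1 17) (expn1 23) (mul1n (2^18)). reflexivity. Qed.
Lemma e24 : order_Fi24' = prodL L24.
Proof. rewrite /order_Fi24' /L24 /prodL /= (expn1 11) (expn1 13) (expn1 17) (expn1 23) (expn1 29) (mul1n (2^21)). reflexivity. Qed.

Lemma c22 : cert L22 7 5. Proof. by vm_compute. Qed.
Lemma c23 : cert L23 13 5. Proof. by vm_compute. Qed.
Lemma c24 : cert L24 13 7. Proof. by vm_compute. Qed.

Local Open Scope group_scope.
Theorem lemma2p11 (gT : finGroupType) (G : {group gT}) :
  #|G| \in [:: order_Fi22; order_Fi23; order_Fi24'] ->
  ~ [Frobenius G] /\ ~ two_Frobenius G.
Proof.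
move=> HG.
have [L [t [u [cL eN]]]] : exists L t u, cert L t u /\ #|G| = prodL L.
  move: HG; rewrite !inE => /or3P[] /eqP ->.
  - by exists L22, 7, 5; split; [exact: c22 | exact: e22].
  - by exists L23, 13, 5; split; [exact: c23 | exact: e23].
  - by exists L24, 13, 7; split; [exact: c24 | exact: e24].
split.
- case/existsP => H frobH.
  have [K frobK] := vcharacter.Frobenius_kernel_exists frobH.
  have fK := FrobeniusWker frobK.
  have [_ ntK _ ltKG _] := Frobenius_context frobK.
  have sKG := proper_sub ltKG.
  apply: (@frob_arith L t u #|K| #|G : K| cL).
  + by rewrite Lagrange.
  + by rewrite cardG_gt1.
  + by rewrite indexg_gt1 proper_subn.
  + exact: Frobenius_ker_coprime fK.
  + by move=> p; apply: frob_ker_part fK.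
- case=> A [B [nAG nAB nBG frobB frobGA]].
  have /Frobenius_kerP[ntA ltAB _ _] := frobB.
  have /Frobenius_kerP[_ ltBAGA _ _] := frobGA.
  have sAB := proper_sub ltAB; have sBG := normal_sub nBG.
  have nAB' : B \subset 'N(A) := normal_norm nAB.
  have nAG' : G \subset 'N(A) := normal_norm nAG.
  have eB : #|B / A| = #|B : A| := card_quotient nAB'.
  have eGB : #|G / A : B / A| = #|G : B|.
    by rewrite index_quotient_eq // subIset // sAB orbT.
  apply: (@frob2_arith L t u #|A| #|B : A| #|G : B| cL).
  + by rewrite (Lagrange sAB) (Lagrange sBG).
  + by rewrite cardG_gt1.
  + by rewrite indexg_gt1 proper_subn.
  + rewrite indexg_gt1; apply: contra (proper_subn ltBAGA) => sGB.
    exact: quotientS.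
  + exact: Frobenius_ker_coprime frobB.
  + by have := Frobenius_ker_coprime frobGA; rewrite eB eGB.
  + by move=> p; apply: frob_ker_part frobB.
  + by move=> q; have := frob_ker_part q frobGA; rewrite eB eGB.
Qed.
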